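(* Let $R$ be a ring with identity and involution $*$, and let $a,b\in R$ with $aR=a^2R$. The following are equivalent: (1) $a$ is core invertible with $a^{\oplus}=b$; (2) $ba^2=a$, $(ab)^*=ab$ and $bR\subseteq aR$; (3) $a$ has a $\{1,3\}$-inverse, and $ba^2=a$ and $b=ba\hat a$ for some $\{1,3\}$-inverse $\hat a$ of $a$.
   Context: An involution on $R$ satisfies $(a^* )^*=a$, $(ab)^*=b^*a^*$, $(a+b)^*=a^*+b^*$. An element $x\in R$ is a core inverse of $a$ if $axa=a$, $xR=aR$ and $Rx=Ra^*$; it is unique when it exists and is denoted $a^{\oplus}$. An element $\hat a$ is a $\{1,3\}$-inverse of $a$ if $a\hat a a=a$ and $(a\hat a)^*=a\hat a$. $cR=\{cr: r\in R\}$. *)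

(* Defs.v *)
From HB Require Import structures.
From mathcomp Require Import all_boot all_algebra.
Set Implicit Arguments. Unset Strict Implicit. Unset Printing Implicit Defensive.
Import GRing.Theory.
Local Open Scope ring_scope.

(* A ring with identity; pzRingType allows also the zero ring (most general). *)

Definition involution (R : pzRingType) (star : R -> R) : Prop :=
  (forall a, star (star a) = a) /\
  (forall a b, star (a * b) = star b * star a) /\
  (forall a b, star (a + b) = star a + star b).

Definition rideal (R : pzRingType) (c : R) : R -> Prop := fun y => exists r, y = c * r.
Definition lideal (R : pzRingType) (c : R) : R -> Prop := fun y => exists r, y = r * c.

Definition set_sub (R : Type) (A B : R -> Prop) : Prop := forall y, A y -> B y.
Definition set_eq (R : Type) (A B : R -> Prop) : Prop := forall y, A y <-> B y.

Definition core_inverse (R : pzRingType) (star : R -> R) (a x : R) : Prop :=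
  a * x * a = a /\ set_eq (rideal x) (rideal a) /\ set_eq (lideal x) (lideal (star a)).

Definition inv13 (R : pzRingType) (star : R -> R) (a ah : R) : Prop :=
  a * ah * a = a /\ star (a * ah) = a * ah.

(* Main.v *)
Require Import Defs.
From HB Require Import structures.
From mathcomp Require Import all_boot all_algebra.
Import GRing.Theory.
Local Open Scope ring_scope.

Section S.
Variables (R : pzRingType) (star : R -> R) (a b : R).
Hypothesis Hstar : involution star.
Hypothesis Ha : set_eq (rideal a) (rideal (a ^+ 2)).

Let starK : forall x, star (star x) = x. Proof. by case: Hstar. Qed.
Let starM : forall x y, star (x * y) = star y * star x. Proof. by case: Hstar => _ []. Qed.

Let Hs : exists s, a = a * a * s.
Proof. have [r Hr] : rideal (a ^+ 2) a by apply/Ha; exists 1; rewrite mulr1.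
by exists r; rewrite -expr2. Qed.

Lemma aba (H : b * a ^+ 2 = a) : a * b * a = a.
Proof. case: Hs => s Es. rewrite {2}Es.
have -> : a*b*(a*a*s) = a*(b*(a*a))*s by rewrite !mulrA.
by rewrite -expr2 H -Es.
Qed.

Lemma p12 : core_inverse star a b ->
  (b * a ^+ 2 = a /\ star (a * b) = a * b /\ set_sub (rideal b) (rideal a)).
Proof.
case=> H1 [Hr Hl].
have [r Er] : rideal a b by apply/Hr; exists 1; rewrite mulr1.
have [r' Er'] : rideal b a by apply/Hr; exists 1; rewrite mulr1.
have [t Et] : lideal (star a) b by apply/Hl; exists 1; rewrite mul1r.
have Ea : star a = star a * star b * star a.
  by rewrite -{1}H1 !starM mulrA.
have Eb : b = b * star b * star a by rewrite {1}Et {1}Ea !mulrA -Et.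
have Hab : star (a * b) = a * b.
  have E : a * b = a * b * star (a * b) by rewrite starM {1}Eb !mulrA.
  by rewrite E starM starK.
have bab : b * a * b = b by rewrite -mulrA -Hab starM mulrA -Eb.
split; first by rewrite expr2 {2}Er' !mulrA bab -Er'.
split=> // y [z ->]; exists (r * z); by rewrite Er mulrA.
Qed.

Lemma p21 : (b * a ^+ 2 = a /\ star (a * b) = a * b /\ set_sub (rideal b) (rideal a))
  -> core_inverse star a b.
Proof.
case=> H [Hab Hsub].
have H1 := aba H.
have [r Er] : rideal a b by apply: Hsub; exists 1; rewrite mulr1.
have bab : b * a * b = b.
    rewrite {2}Er; have -> : b*a*(a*r) = b*(a*a)*r by rewrite !mulrA.
    by rewrite -expr2 H -Er.
split=> //; split=> y; split.
- by case=> z ->; exists (r * z); rewrite Er mulrA.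
- by case=> z ->; exists (a ^+ 2 * z); rewrite mulrA H.
- case=> z ->; exists (z * b * star b).
  by rewrite -!mulrA -starM Hab (mulrA b) bab.
- case=> z ->; exists (z * star a * a).
  by rewrite -{1}H1 starM Hab !mulrA.
Qed.

Lemma p23 : (b * a ^+ 2 = a /\ star (a * b) = a * b /\ set_sub (rideal b) (rideal a)) <->
       ((exists ah, inv13 star a ah) /\ b * a ^+ 2 = a /\
        exists ah, inv13 star a ah /\ b = b * a * ah).
Proof.
split.
  case=> H [Hab Hsub].
  have H1 := aba H.
  have [r Er] : rideal a b by apply: Hsub; exists 1; rewrite mulr1.
  have bab : b * a * b = b.
    rewrite {2}Er; have -> : b*a*(a*r) = b*(a*a)*r by rewrite !mulrA.
    by rewrite -expr2 H -Er.
  by split; [exists b | split=> //; exists b].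
case=> _ [H [ah [[Hah1 Hah3] Eb]]].
have H1 := aba H.
have Eab : a * b = a * ah by rewrite {1}Eb !mulrA H1.
case: Hs => s Es.
have Eba : b * a = a * s.
  rewrite {1}Es; have -> : b*(a*a*s) = b*(a*a)*s by rewrite !mulrA.
  by rewrite -expr2 H.
split=> //; split; first by rewrite Eab.
by move=> y [z ->]; exists (s * ah * z); rewrite Eb Eba !mulrA.
Qed.

End S.

Theorem proposition3p11 (R : pzRingType) (star : R -> R) (a b : R)
  (Hstar : involution star)
  (Ha : set_eq (rideal a) (rideal (a ^+ 2))) :
  [/\ (core_inverse star a b <->
       (b * a ^+ 2 = a /\ star (a * b) = a * b /\ set_sub (rideal b) (rideal a))),
      ((b * a ^+ 2 = a /\ star (a * b) = a * b /\ set_sub (rideal b) (rideal a)) <->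
       ((exists ah, inv13 star a ah) /\ b * a ^+ 2 = a /\
        exists ah, inv13 star a ah /\ b = b * a * ah))
    & (core_inverse star a b <->
       ((exists ah, inv13 star a ah) /\ b * a ^+ 2 = a /\
        exists ah, inv13 star a ah /\ b = b * a * ah))].
Proof.
have E1 : core_inverse star a b <->
       (b * a ^+ 2 = a /\ star (a * b) = a * b /\ set_sub (rideal b) (rideal a)).
  by split; [apply: p12 | apply: p21].
have E2 := @p23 R star a b Ha.
split=> //; tauto.
Qed.
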